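(* Let $\varepsilon>0$ and $x_0$ satisfy $0\le x_0<\tfrac14$ and $\dfrac{\varepsilon^2}{\frac14-\varepsilon^2x_0}<1$; let $\mathcal{C}(\theta)=\tfrac14-\varepsilon^2x_0-\varepsilon^2e^{2\pi i\theta}$, $q_c(z)=z^2+c$, and $\tilde\gamma(\theta)=\tfrac12+\varepsilon e^{2\pi i\theta}\sqrt{1+x_0e^{-4\pi i\theta}}$ (principal branch), $\theta\in\mathbb{T}^1$. Let $\alpha>0$. For each $\theta\in\mathbb{T}^1$ let $\tilde\ell_\theta$ be the affine map of $\mathbb{C}$ with $\tilde\ell_\theta(\tilde\gamma(\theta))=\tilde\gamma(\theta+\tfrac\alpha2)$ and $\tilde\ell_\theta(\tilde\gamma(\theta+\tfrac12))=\tilde\gamma(\theta+\tfrac12+\tfrac\alpha2)$, and define the fibred quadratic polynomial $$\widetilde Q(\theta,\zeta)=\big(\theta+\tfrac\alpha2,\ \tilde\ell_\theta\circ q_{\mathcal{C}(\langle2\theta\rangle)}(\zeta)\big).$$ Then $\tilde\gamma$ is an invariant curve for $\widetilde Q$, i.e. $\tilde\ell_\theta\big(q_{\mathcal{C}(\langle2\theta\rangle)}(\tilde\gamma(\theta))\big)=\tilde\gamma(\theta+\tfrac\alpha2)$ for all $\theta\in\mathbb{T}^1$.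
   Context: $\mathbb{T}^1=\mathbb{R}/\mathbb{Z}$, $\langle x\rangle$ is the fractional part of $x$. The affine map $\tilde\ell_\theta$ is the degree-one Lagrange interpolation polynomial through the two prescribed pairs of points (the points $\tilde\gamma(\theta)$ and $\tilde\gamma(\theta+\frac12)$ are distinct). *)

(* Defs.v *)
From Stdlib Require Import Reals.
From Coquelicot Require Import Coquelicot.
Open Scope R_scope.

Definition e2pi (t : R) : C := (cos (2 * PI * t), sin (2 * PI * t)).

(* principal branch of the complex square root (argument in (-pi/2, pi/2]):
   sqrt(a+ib) = sqrt((|z|+a)/2) + i sgn(b) sqrt((|z|-a)/2), with sgn(0)=+1 *)
Definition Csqrt (z : C) : C :=
  let a := fst z in let b := snd z in
  (sqrt ((Cmod z + a) / 2),
   (if Rlt_dec b 0 then -1 else 1) * sqrt ((Cmod z - a) / 2)).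

Definition fracR (x : R) : R := x - IZR (Int_part x).

Definition Ccal (eps x0 theta : R) : C :=
  Cminus (RtoC (/4 - eps ^ 2 * x0)) (Cmult (RtoC (eps ^ 2)) (e2pi theta)).

Definition qpoly (c z : C) : C := Cplus (Cmult z z) c.

Definition gammaT (eps x0 theta : R) : C :=
  Cplus (RtoC (/2))
    (Cmult (Cmult (RtoC eps) (e2pi theta))
       (Csqrt (Cplus (RtoC 1) (Cmult (RtoC x0) (e2pi (-2 * theta)))))).

Definition lagrange1 (p1 v1 p2 v2 : C) (z : C) : C :=
  Cplus v1 (Cmult (Cdiv (Cminus v2 v1) (Cminus p2 p1)) (Cminus z p1)).

Definition ellT (eps x0 alpha theta : R) : C -> C :=
  lagrange1 (gammaT eps x0 theta) (gammaT eps x0 (theta + alpha / 2))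
            (gammaT eps x0 (theta + /2)) (gammaT eps x0 (theta + /2 + alpha / 2)).

(* fibred quadratic polynomial Q~(theta, zeta); theta in T^1 represented by a real *)
Definition Qtilde (eps x0 alpha theta : R) (zeta : C) : R * C :=
  (theta + alpha / 2,
   ellT eps x0 alpha theta (qpoly (Ccal eps x0 (fracR (2 * theta))) zeta)).

(* Main.v *)
Require Import Defs.
From Stdlib Require Import Reals Lra Lia Psatz ZArith.
From Coquelicot Require Import Coquelicot.
Open Scope R_scope.

Lemma cs_period (x : R) (n : nat) :
  cos (2 * PI * (x + INR n)) = cos (2 * PI * x) /\
  sin (2 * PI * (x + INR n)) = sin (2 * PI * x).
Proof.
  replace (2 * PI * (x + INR n)) with (2 * PI * x + 2 * INR n * PI) by ring.
  split; [apply cos_period | apply sin_period].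
Qed.

Lemma e2pi_int (x : R) (k : Z) : e2pi (x + IZR k) = e2pi x.
Proof.
  unfold e2pi.
  destruct (Z_le_gt_dec 0 k) as [Hk|Hk].
  - rewrite <- (Z2Nat.id k Hk), <- INR_IZR_INZ.
    destruct (cs_period x (Z.to_nat k)) as [-> ->]; reflexivity.
  - replace k with (- Z.of_nat (Z.to_nat (- k)))%Z by lia.
    rewrite opp_IZR, <- INR_IZR_INZ.
    set (n := Z.to_nat (-k)).
    destruct (cs_period (x - INR n) n) as [H1 H2].
    replace (x - INR n + INR n) with x in H1, H2 by ring.
    replace (x + - INR n) with (x - INR n) by ring.
    rewrite H1, H2; reflexivity.
Qed.

Lemma Csqrt_sq (z : C) : Cmult (Csqrt z) (Csqrt z) = z.
Proof.
  destruct z as [a b].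
  unfold Csqrt, Cmult; simpl.
  assert (Hm : Cmod (a, b) = sqrt (a * a + b * b)).
  { unfold Cmod; simpl; f_equal; ring. }
  rewrite Hm.
  set (m := sqrt (a * a + b * b)).
  assert (Hm0 : 0 <= m) by apply sqrt_pos.
  assert (Hm2 : m * m = a * a + b * b) by (apply sqrt_sqrt; nra).
  assert (Hma : Rabs a <= m).
  { assert (Ra : Rabs a * Rabs a = a * a) by (rewrite <- Rabs_mult; apply Rabs_right; nra).
    pose proof (Rabs_pos a). nra. }
  assert (P : 0 <= (m + a) / 2).
  { pose proof (Rle_abs (-a)) as H. rewrite Rabs_Ropp in H. lra. }
  assert (Q : 0 <= (m - a) / 2) by (pose proof (Rle_abs a); lra).
  pose proof (sqrt_sqrt _ P) as SP. pose proof (sqrt_sqrt _ Q) as SQ.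
  assert (SPQ : sqrt ((m + a) / 2) * sqrt ((m - a) / 2) = Rabs b / 2).
  { rewrite <- sqrt_mult by assumption.
    replace ((m + a) / 2 * ((m - a) / 2)) with (Rsqr (Rabs b / 2)).
    - apply sqrt_Rsqr. pose proof (Rabs_pos b); lra.
    - unfold Rsqr. replace (Rabs b / 2 * (Rabs b / 2)) with (Rabs b * Rabs b / 4) by field.
      rewrite <- Rabs_mult, Rabs_right by nra. field_simplify. nra. }
  destruct (Rlt_dec b 0) as [Hb|Hb].
  - rewrite Rabs_left in SPQ by lra. f_equal; nra.
  - rewrite Rabs_right in SPQ by lra. f_equal; nra.
Qed.

Lemma fixed (eps x0 theta : R) :
  qpoly (Ccal eps x0 (fracR (2 * theta))) (gammaT eps x0 theta) = gammaT eps x0 theta.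
Proof.
  unfold fracR.
  replace (2 * theta - IZR (Int_part (2 * theta))) with
    (2 * theta + IZR (- Int_part (2 * theta))) by (rewrite opp_IZR; ring).
  unfold Ccal. rewrite e2pi_int.
  unfold qpoly, gammaT.
  set (S := Csqrt _).
  assert (HS : Cmult S S = Cplus (RtoC 1) (Cmult (RtoC x0) (e2pi (-2 * theta)))).
  { apply Csqrt_sq. }
  clearbody S. destruct S as [p q].
  unfold e2pi in *.
  replace (2 * PI * (2 * theta)) with (2 * (2 * PI * theta)) by ring.
  replace (2 * PI * (-2 * theta)) with (- (2 * (2 * PI * theta))) in HS by ring.
  rewrite cos_neg, sin_neg, cos_2a, sin_2a in *.
  pose proof (sin2_cos2 (2 * PI * theta)) as T. unfold Rsqr in T.
  set (c := cos (2 * PI * theta)) in *. set (s := sin (2 * PI * theta)) in *.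
  unfold Cmult, Cplus, Cminus, Copp, RtoC in *; simpl in *.
  injection HS as H1 H2.
  assert (K1 := f_equal (fun t => eps * eps * (c * c - s * s) * t) H1).
  assert (K2 := f_equal (fun t => eps * eps * (c * s) * t) H2).
  assert (K3 := f_equal (fun t => eps * eps * (s * s - c * c) * t) H2).
  assert (K4 := f_equal (fun t => eps * eps * (c * s) * t) H1).
  assert (K5 := f_equal (fun t => eps * eps * x0 * (s * s + c * c + 1) * t) T).
  simpl in K1, K2, K3, K4, K5.
  f_equal; lra.
Qed.

Lemma lag_at (p1 v1 p2 v2 : C) : lagrange1 p1 v1 p2 v2 p1 = v1.
Proof.
  unfold lagrange1. destruct p1 as [a b]. destruct v1 as [u v].
  set (D := Cdiv _ _). destruct D as [d e].
  unfold Cminus, Cmult, Cplus, Copp; simpl. f_equal; ring.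
Qed.

Theorem mainTheorem3 (eps x0 alpha : R) :
  0 < eps -> 0 <= x0 -> x0 < /4 ->
  eps ^ 2 / (/4 - eps ^ 2 * x0) < 1 ->
  0 < alpha ->
  forall theta : R,
    ellT eps x0 alpha theta
      (qpoly (Ccal eps x0 (fracR (2 * theta))) (gammaT eps x0 theta))
    = gammaT eps x0 (theta + alpha / 2)
  /\ Qtilde eps x0 alpha theta (gammaT eps x0 theta)
     = (theta + alpha / 2, gammaT eps x0 (theta + alpha / 2)).
Proof.
  intros _ _ _ _ _ theta.
  assert (E : ellT eps x0 alpha theta
      (qpoly (Ccal eps x0 (fracR (2 * theta))) (gammaT eps x0 theta))
    = gammaT eps x0 (theta + alpha / 2)).
  { rewrite fixed. unfold ellT. apply lag_at. }
  split; [exact E|]. unfold Qtilde. rewrite E. reflexivity.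
Qed.
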